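(* Consider $n$ users with features $x_1,\dots,x_n\in\mathbb{R}^\ell$, nonnegative embedding weights $\widetilde{w}_{ji}\ge 0$, and any linear graph-based classifier $h=h_{\theta,b}$. If users update via the myopic best-response dynamics described below, then for every user $i\in[n]$ there is at most one round $t\ge 1$ with $x_i^{(t)}\neq x_i^{(t-1)}$.
   Context: Embeddings: $\phi(x_i;x_{-i})=\widetilde{w}_{ii}x_i+\sum_{j\neq i}\widetilde{w}_{ji}x_j$, where $x_{-i}=\{x_j\}_{j\ne i}$. Classifier: $h_{\theta,b}(x_i;x_{-i})=\mathrm{sign}(\theta^\top\phi(x_i;x_{-i})+b)\in\{\pm1\}$ with $\theta\in\mathbb{R}^\ell$, $b\in\mathbb{R}$, and $\mathrm{sign}(0)=+1$. Cost: $c(x,x')=\|x-x'\|_2$. Myopic best-response dynamics: $x_i^{(0)}=x_i$; at each round $t$ all users update concurrently by $x_i^{(t+1)}=\Delta_h(x_i^{(t)};x_{-i}^{(t)},\kappa_i^{(t)})$, where $\Delta_h(x_i;x_{-i},\kappa)=\arg\max_{x'\in\mathbb{R}^\ell} h(x';x_{-i})-c(x_i,x')-\kappa$ and $\kappa_i^{(t)}$ are accumulated costs ($\kappa_i^{(0)}=0$, $\kappa_i^{(t)}=\kappa_i^{(t-1)}+c(x_i^{(t-1)},x_i^{(t)})$). Concretely, user $i$ changes her features in a round only if she is currently classified $-1$ (given the others' current features) and there is a point $x'$ with $h(x';x_{-i})=+1$ and $c(x_i,x')\le 2$; in that case she moves to the minimum-cost such point (whose embedding lies exactly on the decision boundary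 $\theta^\top\phi+b=0$); otherwise she stays. *)

(* Defs.v *)
From HB Require Import structures.
From mathcomp Require Import all_boot all_order all_algebra.
From mathcomp Require Import reals.
Set Implicit Arguments. Unset Strict Implicit. Unset Printing Implicit Defensive.
Import Order.TTheory GRing.Theory Num.Theory.
Local Open Scope ring_scope.

Section Defs.
Variables (R : realType) (n l : nat).

Definition dotp (u v : 'rV[R]_l) : R := \sum_(k < l) u 0 k * v 0 k.

Definition cost (u v : 'rV[R]_l) : R := Num.sqrt (\sum_(k < l) (u 0 k - v 0 k) ^+ 2).

(* Embedding phi(x_i; x_{-i}) = w_ii x_i + sum_{j <> i} w_ji x_j ;
   w j i stands for \widetilde{w}_{ji}. *)
Definition embed (w : 'I_n -> 'I_n -> R) (X : 'I_n -> 'rV[R]_l) (i : 'I_n)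
  : 'rV[R]_l :=
  w i i *: X i + \sum_(j < n | j != i) w j i *: X j.

Definition h (theta : 'rV[R]_l) (b : R) (w : 'I_n -> 'I_n -> R)
  (X : 'I_n -> 'rV[R]_l) (i : 'I_n) : R :=
  if 0 <= dotp theta (embed w X i) + b then 1 else -1.

Definition upd (X : 'I_n -> 'rV[R]_l) (i : 'I_n) (x' : 'rV[R]_l) : 'I_n -> 'rV[R]_l :=
  fun j => if j == i then x' else X j.

(* One round of the myopic best-response dynamics (all users update
   concurrently, given the others' current features):
   user i moves iff she is currently classified -1 and some x' with
   h(x'; x_{-i}) = +1 has c(x_i, x') <= 2; she then moves to a minimum-cost
   such point; otherwise she stays. *)
Definition br_step (theta : 'rV[R]_l) (b : R) (w : 'I_n -> 'I_n -> R)
  (X X' : 'I_n -> 'rV[R]_l) : Prop :=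
  forall i : 'I_n,
    let can_move := h theta b w X i = -1 /\
      exists x', h theta b w (upd X i x') i = 1 /\ cost (X i) x' <= 2 in
    (can_move ->
       h theta b w (upd X i (X' i)) i = 1 /\ cost (X i) (X' i) <= 2 /\
       (forall x', h theta b w (upd X i x') i = 1 -> cost (X i) x' <= 2 ->
                   cost (X i) (X' i) <= cost (X i) x')) /\
    (~ can_move -> X' i = X i).

End Defs.

(* Main.v *)
Require Import Defs.
From HB Require Import structures.
From mathcomp Require Import all_boot all_order all_algebra.
From mathcomp Require Import reals.
From mathcomp Require Import lra.
From Stdlib Require Import Classical.
Import Order.TTheory GRing.Theory Num.Theory.
Set Implicit Arguments. Unset Strict Implicit.
Local Open Scope ring_scope.

Section Aux.
Variables (R : realType) (n l : nat) (theta : 'rV[R]_l) (b : R)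
  (w : 'I_n -> 'I_n -> R).
Hypothesis hw : forall j i : 'I_n, 0 <= w j i.

Lemma dotp0 : dotp theta 0 = 0.
Proof. by rewrite /dotp big1 // => k _; rewrite mxE mulr0. Qed.

Lemma dotpD u v : dotp theta (u + v) = dotp theta u + dotp theta v.
Proof. by rewrite /dotp -big_split; apply: eq_bigr => k _; rewrite mxE mulrDr. Qed.

Lemma dotpZ a u : dotp theta (a *: u) = a * dotp theta u.
Proof.
rewrite /dotp mulr_sumr; apply: eq_bigr => k _; rewrite mxE.
by rewrite mulrCA.
Qed.

Definition fv (Y : 'I_n -> 'rV[R]_l) j := dotp theta (Y j).
Definition score (Y : 'I_n -> 'rV[R]_l) i := dotp theta (embed w Y i) + b.

Lemma scoreE Y i : score Y i =
  w i i * fv Y i + \sum_(j < n | j != i) w j i * fv Y j + b.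
Proof.
rewrite /score /embed dotpD dotpZ.
rewrite (big_morph (dotp theta) dotpD dotp0).
by congr (_ + _ + _); apply: eq_bigr => j _; rewrite dotpZ.
Qed.

Lemma score_mono Y Y' i : (forall j, fv Y j <= fv Y' j) -> score Y i <= score Y' i.
Proof.
move=> H; rewrite !scoreE lerD2r; apply: lerD.
  by apply: ler_wpM2l.
by apply: ler_sum => j _; apply: ler_wpM2l.
Qed.

Lemma h1 {Y i} : h theta b w Y i = 1 -> 0 <= score Y i.
Proof. rewrite /h /score; case: ifP => // _ H; exfalso; move: H; lra. Qed.

Lemma hm1 {Y i} : h theta b w Y i = -1 -> score Y i < 0.
Proof.
rewrite /h /score; case: ifP => [_ H|]; first by exfalso; move: H; lra.
by move/negbT; rewrite -ltNge.
Qed.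

Lemma hpos Y i : 0 <= score Y i -> h theta b w Y i = 1.
Proof. by rewrite /h /score => ->. Qed.

Lemma fv_upd Y i p j : fv (upd Y i p) j = if j == i then dotp theta p else fv Y j.
Proof. by rewrite /fv /upd; case: eqP. Qed.

Lemma score_upd Y i p : score (upd Y i p) i - score Y i
  = w i i * (dotp theta p - fv Y i).
Proof.
rewrite !scoreE fv_upd eqxx.
have -> : \sum_(j < n | j != i) w j i * fv (upd Y i p) j =
          \sum_(j < n | j != i) w j i * fv Y j.
  by apply: eq_bigr => j /negbTE hj; rewrite fv_upd hj.
rewrite mulrBr; lra.
Qed.

Lemma step_mono Y Y' : br_step theta b w Y Y' -> forall j, fv Y j <= fv Y' j.
Proof.
move=> Hs j; have [H1 H2] := Hs j.
case: (classic (h theta b w Y j = -1 /\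
      exists x', h theta b w (upd Y j x') j = 1 /\ cost (Y j) x' <= 2)) => Hc.
  have [Hh _] := H1 Hc; have [Hm _] := Hc.
  have s1 := h1 Hh; have s2 := hm1 Hm.
  have := score_upd Y j (Y' j).
  rewrite /fv.
  set d := dotp theta (Y' j) - dotp theta (Y j) => E.
  have dpos : 0 < d.
    rewrite ltNge; apply/negP => dle.
    have := mulr_ge0_le0 (hw j j) dle; rewrite -E; move: s1 s2; rewrite /fv; lra.
  move: dpos; rewrite /d; lra.
by rewrite /fv (H2 Hc).
Qed.

End Aux.

Theorem proposition1 (R : realType) (n l : nat)
  (x : 'I_n -> 'rV[R]_l) (w : 'I_n -> 'I_n -> R)
  (theta : 'rV[R]_l) (b : R)
  (hw : forall j i : 'I_n, 0 <= w j i)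
  (X : nat -> 'I_n -> 'rV[R]_l)
  (hX0 : X 0%N = x)
  (hstep : forall t : nat, br_step theta b w (X t) (X t.+1)) :
  forall (i : 'I_n) (t1 t2 : nat), (1 <= t1)%N -> (1 <= t2)%N ->
    X t1 i <> X t1.-1 i -> X t2 i <> X t2.-1 i -> t1 = t2.
Proof.
have moved : forall t i, X t.+1 i <> X t i ->
    score theta b w (X t) i < 0 /\ 0 <= score theta b w (X t.+1) i.
  move=> t i Hne; have [H1 H2] := hstep t i.
  case: (classic (h theta b w (X t) i = -1 /\
      exists x', h theta b w (upd (X t) i x') i = 1 /\ cost (X t i) x' <= 2)) => Hc;
    last by exfalso; apply: Hne; apply: H2.
  have [Hh _] := H1 Hc; have [Hm _] := Hc.
  split; first exact: hm1.
  apply: le_trans (h1 Hh) _; apply: score_mono => // j.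
  rewrite fv_upd; case: eqP => [->|_]; first by [].
  have := step_mono hw (hstep t) j; exact.
have later : forall t i k, 0 <= score theta b w (X t) i ->
    0 <= score theta b w (X (t + k)%N) i.
  move=> t i; elim=> [|k IH] H; first by rewrite addn0.
  rewrite addnS; apply: le_trans (IH H) _; apply: score_mono => // j.
  have := step_mono hw (hstep (t+k)%N) j; exact.
have key : forall i a c, (a < c)%N -> X a.+1 i <> X a i -> X c.+1 i <> X c i -> False.
  move=> i a c ac Ha Hc.
  have [_ Pa] := moved _ _ Ha; have [Nc _] := moved _ _ Hc.
  have := later _ i (c - a.+1)%N Pa; rewrite subnKC //.
  move: Nc; lra.
move=> i [|t1] [|t2] // _ _ /= H1 H2.
case: (ltngtP t1 t2) => [lt|lt|->] //; exfalso.
  exact: key lt H1 H2.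
exact: key lt H2 H1.
Qed.
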